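(* For every formula $\varphi$ of $\mathcal L^{\bigcirc}_\square$: $\varphi$ is derivable in $\mathbf{GLC}$ if and only if $\varphi$ is valid, with respect to the $d$-semantics, on every dynamic topological system $\langle X,\tau,f\rangle$ with $X$ finite and $\langle X,\tau\rangle$ scattered.
   Context: Fix a non-empty set $\mathsf{PV}$ of propositional variables. The language $\mathcal L^{\bigcirc}_\square$ is given by $\varphi::= p\mid \varphi\wedge\varphi\mid\neg\varphi\mid\square\varphi\mid\bigcirc\varphi$ with $p\in\mathsf{PV}$. Axioms and rules: Taut; K: $\square(\varphi\to\psi)\to(\square\varphi\to\square\psi)$; 4: $\square\varphi\to\square\square\varphi$; L: $\square(\square\varphi\to\varphi)\to\square\varphi$; ${\rm Next}_\neg$: $\neg\bigcirc\varphi\leftrightarrow\bigcirc\neg\varphi$; ${\rm Next}_\wedge$: $\bigcirc(\varphi\wedge\psi)\leftrightarrow\bigcirc\varphi\wedge\bigcirc\psi$; C: $\bigcirc\varphi\wedge\bigcirc\square\varphi\to\square\bigcirc\varphi$; rules modus ponens, ${\rm Nec}_\square$, ${\rm Nec}_\bigcirc$. $\mathbf{GLC}$ is axiomatised by Taut, K, 4, L, ${\rm Next}_\neg$, ${\rm Next}_\wedge$, C and closed under these rules. A dynamic topological system (DTS) is $\langle X,\tau,f\rangle$ with $f\colon X\to X$ continuous. The Cantor derivative $d(A)$ of $A\subseteq X$ is the set of $x$ in the closure of $A\setminus\{x\}$. A space is scattered if for every $S\subseteq X$, $S\subseteq d(S)$ implies $S=\varnothing$. Under a valuation $\nu\colon\mathsf{PV}\to\wp(X)$: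 $\|p\|=\nu(p)$, $\|\neg\varphi\|=X\setminus\|\varphi\|$, $\|\varphi\wedge\psi\|=\|\varphi\|\cap\|\psi\|$, $\|\square\varphi\|=X\setminus d(\|\neg\varphi\|)$, $\|\bigcirc\varphi\|=f^{-1}(\|\varphi\|)$. Valid on a DTS means truth set $X$ under every valuation. *)

(* Defs.v *)
From HB Require Import structures.
From mathcomp Require Import all_boot all_order.
From mathcomp Require Import boolp classical_sets functions cardinality topology.

Set Implicit Arguments.
Unset Strict Implicit.
Unset Printing Implicit Defensive.

Local Open Scope classical_set_scope.

Inductive formula (PV : Type) : Type :=
| Var : PV -> formula PV
| And : formula PV -> formula PV -> formula PV
| Neg : formula PV -> formula PV
| Box : formula PV -> formula PV
| Next : formula PV -> formula PV.

Arguments Var {PV}.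
Arguments And {PV}.
Arguments Neg {PV}.
Arguments Box {PV}.
Arguments Next {PV}.

Definition Imp {PV} (a b : formula PV) : formula PV := Neg (And a (Neg b)).
Definition Iff {PV} (a b : formula PV) : formula PV := And (Imp a b) (Imp b a).

Fixpoint beval {PV} (v : formula PV -> bool) (phi : formula PV) : bool :=
  match phi with
  | And a b => beval v a && beval v b
  | Neg a => ~~ beval v a
  | _ => v phi
  end.

(* Taut: all (substitution instances of) classical propositional tautologies. *)
Definition tautology {PV} (phi : formula PV) : Prop :=
  forall v : formula PV -> bool, beval v phi = true.

Inductive GLC {PV : Type} : formula PV -> Prop :=
| ax_taut phi : tautology phi -> GLC phi
| ax_K phi psi : GLC (Imp (Box (Imp phi psi)) (Imp (Box phi) (Box psi)))
| ax_4 phi : GLC (Imp (Box phi) (Box (Box phi)))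
| ax_L phi : GLC (Imp (Box (Imp (Box phi) phi)) (Box phi))
| ax_NextNeg phi : GLC (Iff (Neg (Next phi)) (Next (Neg phi)))
| ax_NextAnd phi psi : GLC (Iff (Next (And phi psi)) (And (Next phi) (Next psi)))
| ax_C phi : GLC (Imp (And (Next phi) (Next (Box phi))) (Box (Next phi)))
| rule_MP phi psi : GLC (Imp phi psi) -> GLC phi -> GLC psi
| rule_NecBox phi : GLC phi -> GLC (Box phi)
| rule_NecNext phi : GLC phi -> GLC (Next phi).

Definition cderiv {X : topologicalType} (A : set X) : set X :=
  [set x | closure (A `\ x) x].

Definition scattered (X : topologicalType) : Prop :=
  forall S : set X, S `<=` cderiv S -> S = set0.

Fixpoint truth {PV} {X : topologicalType} (f : X -> X) (nu : PV -> set X)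
    (phi : formula PV) : set X :=
  match phi with
  | Var p => nu p
  | And a b => truth f nu a `&` truth f nu b
  | Neg a => ~` truth f nu a
  | Box a => ~` cderiv (~` truth f nu a)
  | Next a => f @^-1` truth f nu a
  end.

Definition valid_on {PV} {X : topologicalType} (f : X -> X) (phi : formula PV) : Prop :=
  forall nu : PV -> set X, truth f nu phi = setT.

(* Main.v *)
From HB Require Import structures.
Require Import Defs.
From mathcomp Require Import all_boot all_order.
From mathcomp Require Import boolp classical_sets functions cardinality topology.
From mathcomp Require Import zify.
From Stdlib Require List.
Set Implicit Arguments.
Unset Strict Implicit.
Unset Printing Implicit Defensive.

Section PT.
Variable PV : Type.
Variable p0 : PV.
Implicit Types a b c d g : formula PV.

Definition Or a b := Neg (And (Neg a) (Neg b)).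
Definition Dia a := Neg (Box (Neg a)).
Definition nexts (i : nat) a := iter i (@Next PV) a.
Definition top : formula PV := Imp (Var p0) (Var p0).
Definition bigAnd (l : list (formula PV)) := foldr And top l.

Ltac taut := let v := fresh "v" in move=> v; rewrite /Imp /Iff /Or /Dia /=;
  repeat match goal with
  | |- context [beval v ?a] => case: (beval v a)
  | |- context [v ?a] => case: (v a) end; done.

Lemma mpt a b : tautology (Imp a b) -> GLC a -> GLC b.
Proof. by move=> T Ha; apply: rule_MP (ax_taut T) Ha. Qed.

Lemma mpt2 a b c : tautology (Imp a (Imp b c)) -> GLC a -> GLC b -> GLC c.
Proof. by move=> T Ha Hb; apply: rule_MP (rule_MP (ax_taut T) Ha) Hb. Qed.

Lemma mpt3 a b c d : tautology (Imp a (Imp b (Imp c d))) -> GLC a -> GLC b -> GLC c -> GLC d.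
Proof. by move=> T Ha Hb Hc; apply: rule_MP (rule_MP (rule_MP (ax_taut T) Ha) Hb) Hc. Qed.

Lemma mpt4 a b c d e : tautology (Imp a (Imp b (Imp c (Imp d e)))) -> GLC a -> GLC b -> GLC c -> GLC d -> GLC e.
Proof. by move=> T Ha Hb Hc Hd; apply: rule_MP (rule_MP (rule_MP (rule_MP (ax_taut T) Ha) Hb) Hc) Hd. Qed.

Lemma top_pr : GLC top.
Proof. by apply: ax_taut; taut. Qed.

Lemma imp_refl a : GLC (Imp a a).
Proof. by apply: ax_taut; taut. Qed.

Lemma imp_trans a b c : GLC (Imp a b) -> GLC (Imp b c) -> GLC (Imp a c).
Proof. by apply: mpt2; taut. Qed.

Lemma and_intro c a b : GLC (Imp c a) -> GLC (Imp c b) -> GLC (Imp c (And a b)).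
Proof. by apply: mpt2; taut. Qed.

Lemma and_el a b : GLC (Imp (And a b) a).
Proof. by apply: ax_taut; taut. Qed.

Lemma and_er a b : GLC (Imp (And a b) b).
Proof. by apply: ax_taut; taut. Qed.

Lemma box_mono a b : GLC (Imp a b) -> GLC (Imp (Box a) (Box b)).
Proof. by move=> H; apply: rule_MP (ax_K _ _) (rule_NecBox H). Qed.

Lemma box_and a b : GLC (Imp (And (Box a) (Box b)) (Box (And a b))).
Proof.
have H1 : GLC (Imp (Box a) (Box (Imp b (And a b)))) by apply: box_mono; apply: ax_taut; taut.
have H2 := ax_K b (And a b).
by apply: mpt2 H1 H2; taut.
Qed.

Lemma next_mono a b : GLC (Imp a b) -> GLC (Imp (Next a) (Next b)).
Proof.
move=> H; have H1 := rule_NecNext H.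
have H2 := ax_NextNeg (And a (Neg b)).
have H3 := ax_NextAnd a (Neg b).
have H4 := ax_NextNeg b.
apply: (mpt4 _ H1 H2 H3 H4); taut.
Qed.

Lemma next_neg1 a : GLC (Imp (Next (Neg a)) (Neg (Next a))).
Proof. by apply: (mpt _ (ax_NextNeg a)); taut. Qed.
Lemma next_neg2 a : GLC (Imp (Neg (Next a)) (Next (Neg a))).
Proof. by apply: (mpt _ (ax_NextNeg a)); taut. Qed.
Lemma next_and1 a b : GLC (Imp (And (Next a) (Next b)) (Next (And a b))).
Proof. by apply: (mpt _ (ax_NextAnd a b)); taut. Qed.
Lemma next_and2 a b : GLC (Imp (Next (And a b)) (And (Next a) (Next b))).
Proof. by apply: (mpt _ (ax_NextAnd a b)); taut. Qed.

Lemma nextsS i a : nexts i.+1 a = Next (nexts i a). Proof. by []. Qed.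
Lemma nextsSr i a : nexts i.+1 a = nexts i (Next a). Proof. exact: iterSr. Qed.
Lemma nextsD i j a : nexts (i + j) a = nexts i (nexts j a). Proof. exact: iterD. Qed.

Lemma nexts_mono i a b : GLC (Imp a b) -> GLC (Imp (nexts i a) (nexts i b)).
Proof. by elim: i => [//|i IH] H; rewrite !nextsS; apply: next_mono; apply: IH. Qed.

Lemma nexts_nec i a : GLC a -> GLC (nexts i a).
Proof. by elim: i => [//|i IH] H; rewrite nextsS; apply: rule_NecNext; apply: IH. Qed.

Lemma nexts_neg1 i a : GLC (Imp (nexts i (Neg a)) (Neg (nexts i a))).
Proof.
elim: i => [|i IH]; first exact: imp_refl.
by rewrite !nextsS; apply: imp_trans (next_mono IH) (next_neg1 _).
Qed.

Lemma nexts_neg2 i a : GLC (Imp (Neg (nexts i a)) (nexts i (Neg a))).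
Proof.
elim: i => [|i IH]; first exact: imp_refl.
by rewrite !nextsS; apply: imp_trans (next_neg2 _) (next_mono IH).
Qed.

Lemma nexts_and1 i a b : GLC (Imp (And (nexts i a) (nexts i b)) (nexts i (And a b))).
Proof.
elim: i => [|i IH]; first exact: imp_refl.
by rewrite !nextsS; apply: imp_trans (next_and1 _ _) (next_mono IH).
Qed.

Lemma nexts_and2 i a b : GLC (Imp (nexts i (And a b)) (And (nexts i a) (nexts i b))).
Proof.
elim: i => [|i IH]; first exact: imp_refl.
by rewrite !nextsS; apply: imp_trans (next_mono IH) (next_and2 _ _).
Qed.

Lemma nexts_or i a b : GLC (Imp (nexts i (Or a b)) (Or (nexts i a) (nexts i b))).
Proof.
have H1 := nexts_neg1 i (And (Neg a) (Neg b)).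
have H2 := nexts_and1 i (Neg a) (Neg b).
have H3 := nexts_neg2 i a.
have H4 := nexts_neg2 i b.
rewrite /Or; apply: (mpt4 _ H1 H2 H3 H4); taut.
Qed.

Lemma genC i a : GLC (Imp (And (nexts i a) (nexts i (Box a))) (Box (nexts i a))).
Proof.
elim: i a => [|i IH] a; first by apply: ax_taut; taut.
rewrite !nextsSr.
have H1 : GLC (Imp (And (nexts i (Next a)) (nexts i (Next (Box a)))) (nexts i (Box (Next a)))).
  apply: imp_trans (nexts_and1 _ _ _) _; apply: nexts_mono; exact: ax_C.
have H2 := IH (Next a).
by apply: (mpt2 _ H1 H2); taut.
Qed.

Lemma bigAnd_in l x : List.In x l -> GLC (Imp (bigAnd l) x).
Proof.
elim: l => [//|y l IH] /= [<-|/IH H]; first exact: and_el.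
by apply: imp_trans (and_er _ _) H.
Qed.

Lemma bigAnd_intro c l : (forall x, List.In x l -> GLC (Imp c x)) -> GLC (Imp c (bigAnd l)).
Proof.
elim: l => [|y l IH] H /=; first by apply: (mpt _ top_pr); taut.
apply: and_intro; first by apply: H; left.
by apply: IH => x Hx; apply: H; right.
Qed.

Lemma box_bigAnd_intro c l : (forall x, List.In x l -> GLC (Imp c (Box x))) ->
  GLC (Imp c (Box (bigAnd l))).
Proof.
elim: l => [|y l IH] H /=; first by apply: (mpt _ (rule_NecBox top_pr)); taut.
apply: imp_trans (box_and _ _); apply: and_intro; first by apply: H; left.
by apply: IH => x Hx; apply: H; right.
Qed.

Lemma nexts_bigAnd_intro i c l : (forall x, List.In x l -> GLC (Imp c (nexts i x))) ->
  GLC (Imp c (nexts i (bigAnd l))).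
Proof.
elim: l => [|y l IH] H /=; first by apply: (mpt _ (nexts_nec i top_pr)); taut.
apply: imp_trans (nexts_and1 _ _ _); apply: and_intro; first by apply: H; left.
by apply: IH => x Hx; apply: H; right.
Qed.

Definition Con a := ~ GLC (Neg a).

Lemma con_imp a b : Con a -> GLC (Imp a b) -> Con b.
Proof. by move=> Ca H Hb; apply: Ca; apply: (mpt2 _ H Hb); taut. Qed.

Lemma lob_dia c p : GLC (Imp (And (Box c) (Neg (Box p))) (Dia (And c (And (Neg p) (Box p))))).
Proof.
set g := And c (And (Neg p) (Box p)).
have H1 : GLC (Imp (Box c) (Box (Imp (Neg g) (Imp (Box p) p)))).
  by apply: box_mono; apply: ax_taut; rewrite /g; taut.
have H2 := ax_K (Neg g) (Imp (Box p) p).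
have H3 := ax_L p.
by apply: (mpt3 _ H1 H2 H3); taut.
Qed.

Lemma dia_and b g : GLC (Imp (And (Box b) (Dia g)) (Dia (And g b))).
Proof.
have H1 : GLC (Imp (Box b) (Box (Imp (Neg (And g b)) (Neg g)))).
  by apply: box_mono; apply: ax_taut; taut.
have H2 := ax_K (Neg (And g b)) (Neg g).
by apply: (mpt2 _ H1 H2); taut.
Qed.

Lemma con_dia g : Con (Dia g) -> Con g.
Proof. by move=> C H; apply: C; apply: (mpt _ (rule_NecBox H)); taut. Qed.

Lemma con_next a : Con (Next a) -> Con a.
Proof. move=> C H; apply: C; apply: (mpt2 _ (rule_NecNext H) (next_neg1 a)); taut. Qed.

Lemma con_nexts i a : Con (nexts i a) -> Con a.
Proof.
move=> C H; apply: C; apply: (mpt2 _ (nexts_nec i H) (nexts_neg1 i a)); taut.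
Qed.

Definition lit (G : formula PV -> bool) a := if G a then a else Neg a.

Lemma lind (l : list (formula PV)) a : Con a ->
  exists G : formula PV -> bool, Con (And a (bigAnd (List.map (lit G) l))).
Proof.
move=> Ca.
suff [b [Hba Cb Hd]] : exists b, [/\ GLC (Imp b a), Con b &
    forall t, List.In t l -> GLC (Imp b t) \/ GLC (Imp b (Neg t))].
  exists (fun t => `[< GLC (Imp b t) >]); apply: con_imp Cb _.
  apply: and_intro => //; apply: bigAnd_intro => x /List.in_map_iff [t [<- Ht]].
  rewrite /lit; case: asboolP => // Hn.
  by case: (Hd t Ht).
elim: l a Ca => [|t l IH] a Ca.
  by exists a; split => //; exact: imp_refl.
have [C1|C1] := pselect (Con (And a t)).
- have [b [Hba Cb Hd]] := IH _ C1.
  exists b; split => //; first by apply: imp_trans Hba (and_el _ _).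
  move=> x /= [<-|Hx]; last exact: Hd.
  by left; apply: imp_trans Hba (and_er _ _).
- have C2 : Con (And a (Neg t)).
    move=> H; apply: Ca; apply: (mpt2 _ (contrapT C1) H); taut.
  have [b [Hba Cb Hd]] := IH _ C2.
  exists b; split => //; first by apply: imp_trans Hba (and_el _ _).
  move=> x /= [<-|Hx]; last exact: Hd.
  by right; apply: imp_trans Hba (and_er _ _).
Qed.

End PT.

Ltac taut := let v := fresh "v" in move=> v; rewrite /Imp /Iff /Or /Dia /=;
  repeat match goal with
  | |- context [beval v ?a] => case: (beval v a)
  | |- context [v ?a] => case: (v a) end; done.

Section Layers.
Variable PV : Type.
Variable p0 : PV.
Variable phi : formula PV.
Implicit Types a b c t : formula PV.

Fixpoint odepth t : nat := match t with
  | Var _ => 0 | And a b => maxn (odepth a) (odepth b) | Neg a => odepth a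
  | Box a => odepth a | Next a => (odepth a).+1 end.
Fixpoint base t := match t with Next a => base a | _ => t end.
Fixpoint lead t : nat := match t with Next a => (lead a).+1 | _ => 0 end.
Fixpoint sub t : list (formula PV) := t :: match t with
  | Var _ => nil | And a b => List.app (sub a) (sub b)
  | Neg a => sub a | Box a => sub a | Next a => sub a end.

Definition n := odepth phi.
Definition inS k t := (k + odepth t <= n)%N /\ List.In (base t) (sub phi).

Lemma odepth_nexts j t : odepth (nexts j t) = j + odepth t.
Proof. by elim: j => //= j IH; rewrite IH. Qed.
Lemma base_nexts j t : base (nexts j t) = base t.
Proof. by elim: j. Qed.
Lemma base_lead t : nexts (lead t) (base t) = t.
Proof. by elim: t => //= a IH; rewrite -[in RHS]IH. Qed.
Lemma lead_le t : (lead t <= odepth t)%N.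
Proof. by elim: t => //= a IH. Qed.
Lemma sub_refl t : List.In t (sub t).
Proof. by case: t => * /=; left. Qed.
Lemma sub_trans a b c : List.In b (sub a) -> List.In c (sub b) -> List.In c (sub a).
Proof.
elim: a => [p|a1 IH1 a2 IH2|a1 IH1|a1 IH1|a1 IH1] /= [<-|Hb] Hc //.
- right; move: Hb; rewrite !List.in_app_iff => -[Hb|Hb]; [left; exact: IH1 Hb Hc | right; exact: IH2 Hb Hc].
- by right; exact: IH1 Hb Hc.
- by right; exact: IH1 Hb Hc.
- by right; exact: IH1 Hb Hc.
Qed.
Lemma base_sub t : List.In (base t) (sub t).
Proof. by elim: t => [p|a _ b _|a _|a _|a IH] /=; try (left; done); right. Qed.

Lemma inS_and k a b : inS k (And a b) -> inS k a /\ inS k b.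
Proof.
move=> [H1 H2]; split; split.
- by move: H1 => /=; lia.
- by apply: sub_trans H2 _; apply: sub_trans (base_sub a); rewrite /=; right; apply/List.in_app_iff; left; apply: sub_refl.
- by move: H1 => /=; lia.
- by apply: sub_trans H2 _; apply: sub_trans (base_sub b); rewrite /=; right; apply/List.in_app_iff; right; apply: sub_refl.
Qed.
Lemma inS_neg k a : inS k (Neg a) -> inS k a.
Proof.
move=> [H1 H2]; split => //.
by apply: sub_trans H2 _; apply: sub_trans (base_sub a); rewrite /=; right; apply: sub_refl.
Qed.
Lemma inS_box k a : inS k (Box a) -> inS k a.
Proof.
move=> [H1 H2]; split => //.
by apply: sub_trans H2 _; apply: sub_trans (base_sub a); rewrite /=; right; apply: sub_refl.
Qed.
Lemma inS_nexts k i t : inS k (nexts i t) <-> inS (k + i) t.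
Proof. by rewrite /inS odepth_nexts base_nexts addnA. Qed.
Lemma inS_next k a : inS k (Next a) -> inS k.+1 a /\ (k < n)%N.
Proof.
move=> H; split; first by move: (proj1 (inS_nexts k 1 a) H); rewrite addn1.
by case: H => /= H _; lia.
Qed.

Definition BL := List.flat_map (fun c => List.map (fun j => nexts j c) (List.seq 0 n.+1)) (sub phi).
Definition L k := List.filter (fun t => (k + odepth t <= n)%N) BL.
Definition M := length BL.

Lemma inL k t : List.In t (L k) <-> inS k t.
Proof.
rewrite /L List.filter_In /BL List.in_flat_map; split.
- move=> [[c [Hc /List.in_map_iff [j [<- Hj]]]] Hd]; split => //.
  by rewrite base_nexts; apply: sub_trans Hc (base_sub c).
- move=> [Hd Hb]; split => //; exists (base t); split => //.
  apply/List.in_map_iff; exists (lead t); split; first exact: base_lead.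
  apply/List.in_seq; have := lead_le t; move: Hd; lia.
Qed.

Lemma L_len k : (length (L k) <= M)%N.
Proof. by apply/leP; apply: List.filter_length_le. Qed.

Definition hat k (G : formula PV -> bool) := bigAnd p0 (List.map (lit G) (L k)).
Definition mcs k G := Con (hat k G) /\ (forall t, ~ inS k t -> G t = false).

Lemma hat_lit k G t : inS k t -> GLC (Imp (hat k G) (lit G t)).
Proof.
by move=> /inL H; apply: bigAnd_in; apply/List.in_map_iff; exists t.
Qed.

Lemma mcs_pos k G a t : mcs k G -> Con (And a (hat k G)) -> inS k t -> GLC (Imp a t) -> G t.
Proof.
move=> [C N] Ca Ht Hat; have := hat_lit G Ht; rewrite /lit.
case: (G t) => // H; exfalso; apply: Ca; apply: (mpt2 _ Hat H).
move=> v /=; rewrite /Imp /=; case: (beval v a); case: (beval v t); by case: (beval v (hat k G)).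
Qed.

Lemma mcs_neg k G a t : mcs k G -> Con (And a (hat k G)) -> inS k t -> GLC (Imp a (Neg t)) -> G t = false.
Proof.
move=> [C N] Ca Ht Hat; have := hat_lit G Ht; rewrite /lit.
case: (G t) => // H; exfalso; apply: Ca; apply: (mpt2 _ Hat H).
move=> v /=; rewrite /Imp /=; case: (beval v a); case: (beval v t); by case: (beval v (hat k G)).
Qed.

Lemma mcs_pos2 k G a t : mcs k G -> Con (And a (hat k G)) -> inS k t ->
  GLC (Imp (And a (hat k G)) t) -> G t.
Proof.
move=> [C N] Ca Ht Hat; have := hat_lit G Ht; rewrite /lit.
case: (G t) => // H; exfalso; apply: Ca; apply: (mpt2 _ Hat H).
move=> v /=; rewrite /Imp /=; case: (beval v a); case: (beval v t); by case: (beval v (hat k G)).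
Qed.

Lemma mcs_and k G a b : mcs k G -> inS k (And a b) -> G (And a b) = G a && G b.
Proof.
move=> [C N] H; have [Ha Hb] := inS_and H.
have H1 := hat_lit G H; have H2 := hat_lit G Ha; have H3 := hat_lit G Hb.
move: H1 H2 H3; rewrite /lit.
case: (G (And a b)); case: (G a); case: (G b) => // H1 H2 H3; exfalso; apply: C;
  apply: (mpt3 _ H1 H2 H3); move=> v; rewrite /Imp /=;
  case: (beval v a); case: (beval v b); by case: (beval v (hat k G)).
Qed.

Lemma mcs_negE k G a : mcs k G -> inS k (Neg a) -> G (Neg a) = ~~ G a.
Proof.
move=> [C N] H; have Ha := inS_neg H.
have H1 := hat_lit G H; have H2 := hat_lit G Ha.
move: H1 H2; rewrite /lit.
case: (G (Neg a)); case: (G a) => // H1 H2; exfalso; apply: C;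
  apply: (mpt2 _ H1 H2); move=> v; rewrite /Imp /=;
  case: (beval v a); by case: (beval v (hat k G)).
Qed.


Lemma mcs_next k G : mcs k G -> (k < n)%N -> mcs k.+1 (fun t => G (Next t)).
Proof.
move=> [C N] kn; split; last first.
  move=> t Ht; apply: N => H; apply: Ht; have := proj1 (inS_nexts k 1 t) H; by rewrite addn1.
have H : GLC (Imp (hat k G) (Next (hat k.+1 (fun t => G (Next t))))).
  apply: (@nexts_bigAnd_intro _ _ 1) => x /List.in_map_iff [t [<- /inL Ht]].
  have Ht' : inS k (Next t) by apply/(inS_nexts k 1 t); rewrite addn1.
  have := hat_lit G Ht'; rewrite /lit /=; case: (G (Next t)) => // H1.
  by apply: imp_trans H1 (next_neg2 _).
by apply: con_next; apply: con_imp C H.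
Qed.

Definition Ehat k i G := bigAnd p0 (List.map (lit (fun t => G (nexts i t))) (L (k + i))).
Definition bx j := List.flat_map (fun t => match t with Box c => [:: c] | _ => [::] end) (L j).
Lemma in_bx j c : List.In c (bx j) <-> List.In (Box c) (L j).
Proof.
rewrite /bx List.in_flat_map; split.
- by move=> [t [Ht]]; case: t Ht => // a Ha /= [<-|//].
- by move=> H; exists (Box c); split => //; left.
Qed.
Definition cl k i G := List.filter (fun c => G (nexts i (Box c))) (bx (k + i)).
Definition core k i G := bigAnd p0 (List.map (fun c => And c (Box c)) (cl k i G)).
Definition beta k G := bigAnd p0 (List.map (fun i => Or (nexts i (Ehat k i G)) (nexts i (core k i G)))
   (List.seq 1 (n - k))).

Lemma hat_E k i G : mcs k G -> GLC (Imp (hat k G) (nexts i (Ehat k i G))).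
Proof.
move=> [C N]; apply: nexts_bigAnd_intro => x /List.in_map_iff [t [<- /inL Ht]].
have Ht' : inS k (nexts i t) by apply/inS_nexts.
have := hat_lit G Ht'; rewrite /lit; case: (G (nexts i t)) => // H1.
by apply: imp_trans H1 (nexts_neg2 _ _).
Qed.

Lemma hat_core k i G : mcs k G -> GLC (Imp (hat k G) (nexts i (Box (core k i G)))).
Proof.
move=> [C N].
have H1 : GLC (Imp (bigAnd p0 (List.map (@Box PV) (cl k i G))) (Box (core k i G))).
  apply: box_bigAnd_intro => x /List.in_map_iff [c [<- Hc]].
  have H2 : GLC (Imp (bigAnd p0 (List.map (@Box PV) (cl k i G))) (Box c)).
    by apply: bigAnd_in; apply/List.in_map_iff; exists c.
  apply: imp_trans H2 _.
  have H3 := ax_4 c; have H4 := box_and c (Box c).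
  by apply: (mpt2 _ H3 H4); move=> v; rewrite /Imp /=; case: (v (Box c)); case: (v (Box (Box c))); case: (v (Box (And c (Box c)))).
apply: imp_trans (nexts_mono i H1).
apply: nexts_bigAnd_intro => x /List.in_map_iff [c [<- Hc]].
move: Hc; rewrite /cl List.filter_In in_bx => -[/inL Hc Gc].
have Hc' : inS k (nexts i (Box c)) by apply/inS_nexts.
by have := hat_lit G Hc'; rewrite /lit Gc.
Qed.

Lemma hat_beta k G : mcs k G -> GLC (Imp (hat k G) (Box (beta k G))).
Proof.
move=> HG; apply: box_bigAnd_intro => x /List.in_map_iff [i [<- Hi]].
set E := Ehat k i G; set c := core k i G.
have H1 : GLC (Imp (hat k G) (nexts i (Or E c))).
  apply: imp_trans (hat_E i HG) _; apply: nexts_mono; apply: ax_taut.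
  by move=> v; rewrite /Imp /Or /=; case: (beval v E); case: (beval v c).
have H2 : GLC (Imp (hat k G) (nexts i (Box (Or E c)))).
  apply: imp_trans (hat_core i HG) _; apply: nexts_mono; apply: box_mono; apply: ax_taut.
  by move=> v; rewrite /Imp /Or /=; case: (beval v E); case: (beval v c).
have H3 := genC i (Or E c).
have H4 : GLC (Imp (hat k G) (Box (nexts i (Or E c)))).
  apply: (mpt3 _ H1 H2 H3); move=> v; rewrite /Imp /=.
  case: (beval v (hat k G)); case: (beval v (nexts i (Or E c))); case: (beval v (nexts i (Box (Or E c)))); by case: (v (Box (nexts i (Or E c)))).
by apply: imp_trans H4 (box_mono (nexts_or _ _ _)).
Qed.

Lemma con_extract_pos k D a t : mcs k D -> Con (And a (hat k D)) -> inS k t -> GLC (Imp a t) -> D t.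
Proof. exact: mcs_pos. Qed.

Lemma exist_succ k G psi : (k <= n)%N -> mcs k G -> inS k (Box psi) -> G (Box psi) = false ->
  exists D, [/\ mcs k D, D (Box psi), D psi = false,
    (forall chi, G (Box chi) -> D chi /\ D (Box chi)) &
    forall i, (0 < i)%N -> (k + i <= n)%N ->
      (forall t, inS (k + i) t -> G (nexts i t) = D (nexts i t)) \/
      (forall chi, G (nexts i (Box chi)) -> D (nexts i chi) /\ D (nexts i (Box chi)))].
Proof.
move=> kn HG Hpsi Gpsi.
set g := And (core k 0 G) (And (Neg psi) (Box psi)).
set alpha := And g (beta k G).
have H1 : GLC (Imp (hat k G) (Dia alpha)).
  have Hb := hat_beta HG.
  have Hc : GLC (Imp (hat k G) (Box (core k 0 G))) by exact: (hat_core 0 HG).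
  have Hp : GLC (Imp (hat k G) (Neg (Box psi))) by have := hat_lit G Hpsi; rewrite /lit Gpsi.
  have Hl := lob_dia (core k 0 G) psi.
  have Hd := dia_and (beta k G) g.
  have Hgd : GLC (Imp (hat k G) (Dia g)).
    apply: (mpt3 _ Hc Hp Hl); move=> v; rewrite /Imp /=.
    case: (beval v (hat k G)); case: (v (Box (core k 0 G))); case: (v (Box psi)); by case: (v (Box (Neg g))).
  apply: (mpt3 _ Hb Hgd Hd); taut.
have Ca : Con alpha by apply: con_dia; apply: con_imp (proj1 HG) H1.
have [D0 CD0] := lind p0 (L k) Ca.
pose D t := D0 t && `[< inS k t >].
have hatD : hat k D = hat k D0.
  rewrite /hat; f_equal; apply: List.map_ext_in => t /inL Ht.
  by rewrite /lit /D asboolT // andbT.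
have CD : Con (And alpha (hat k D)) by rewrite hatD.
have mD : mcs k D.
  split; first by apply: con_imp CD (and_er _ _).
  by move=> t Ht; rewrite /D; case: asboolP => //; rewrite andbF.
have Nrm : forall t, G t -> inS k t.
  by move=> t Gt; apply: contrapT => Ht; move: Gt; rewrite (proj2 HG t Ht).
have Hag : GLC (Imp alpha (core k 0 G)) by apply: ax_taut; rewrite /alpha /g; taut.
exists D; split => //.
- by apply: (mcs_pos mD CD Hpsi); apply: ax_taut; rewrite /alpha /g; taut.
- by apply: (mcs_neg mD CD (inS_box Hpsi)); apply: ax_taut; rewrite /alpha /g; taut.
- move=> chi Gc; have Hc := Nrm _ Gc.
  have Hin : List.In chi (cl k 0 G).
    by rewrite /cl List.filter_In in_bx addn0; split => //; apply/inL.
  have Hac : GLC (Imp alpha (And chi (Box chi))).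
    apply: imp_trans Hag _; apply: bigAnd_in; apply/List.in_map_iff; exists chi; split => //.
  split.
  + by apply: (mcs_pos mD CD (inS_box Hc)); apply: imp_trans Hac (and_el _ _).
  + by apply: (mcs_pos mD CD Hc); apply: imp_trans Hac (and_er _ _).
- move=> i i0 ikn.
  have [E|NE] := pselect (forall t, inS (k + i) t -> G (nexts i t) = D (nexts i t)); [left|right] => //.
  move/existsNP: NE => [t /not_implyP [Ht Hne]].
  have Ht' : inS k (nexts i t) by apply/inS_nexts.
  set E := Ehat k i G; set c := core k i G.
  have HEt : GLC (Imp E (lit (fun t => G (nexts i t)) t)).
    by apply: bigAnd_in; apply/List.in_map_iff; exists t; split => //; apply/inL.
  have [X [HX1 HX2]] : exists X, GLC (Imp (nexts i E) X) /\ GLC (Imp (hat k D) (Neg X)).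
    move: HEt; rewrite /lit; case HGt: (G (nexts i t)) => HEt.
    + exists (nexts i t); split; first exact: nexts_mono.
      have := hat_lit D Ht'; rewrite /lit.
      by case HDt: (D (nexts i t)) => //; rewrite HGt HDt in Hne.
    + exists (Neg (nexts i t)); split; first by apply: imp_trans (nexts_mono i HEt) (nexts_neg1 _ _).
      have := hat_lit D Ht'; rewrite /lit.
      case HDt: (D (nexts i t)) => H; last by rewrite HGt HDt in Hne.
      by apply: imp_trans H _; apply: ax_taut; taut.
  have Hab : GLC (Imp alpha (Or (nexts i E) (nexts i c))).
    apply: imp_trans (and_er g (beta k G)) _; apply: bigAnd_in; apply/List.in_map_iff.
    exists i; split => //; apply/List.in_seq; move: i0 ikn; lia.
  have Hc : GLC (Imp (And alpha (hat k D)) (nexts i c)).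
    by apply: (mpt3 _ Hab HX1 HX2); taut.
  move=> chi Gc; have Hb : inS (k + i) (Box chi) by apply/inS_nexts; apply: Nrm.
  have Hin : List.In chi (cl k i G).
    by rewrite /cl List.filter_In in_bx; split => //; apply/inL.
  have Hac : GLC (Imp (And alpha (hat k D)) (And (nexts i chi) (nexts i (Box chi)))).
    apply: imp_trans Hc _; apply: imp_trans _ (nexts_and2 _ _ _); apply: nexts_mono.
    by apply: bigAnd_in; apply/List.in_map_iff; exists chi.
  split.
  + apply: (mcs_pos2 mD CD _ (imp_trans Hac (and_el _ _))).
    by apply/inS_nexts; apply: inS_box.
  + by apply: (mcs_pos2 mD CD _ (imp_trans Hac (and_er _ _))); apply/inS_nexts.
Qed.

Record pt := Pt { lay : nat; dec : formula PV -> bool; cs : nat -> nat }.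

Definition Bd k := (k.+1 * M)%N.
Definition isBox t := match t with Box _ => true | _ => false end.
Definition miss k (G : formula PV -> bool) := count (fun t => isBox t && ~~ G t) (L k).

Definition valid x := [/\ (lay x <= n)%N, mcs (lay x) (dec x), (forall i, cs x i.+1 <= cs x i)%N,
  (forall i, (n - lay x < i)%N -> cs x i = 0) & (cs x 0 + miss (lay x) (dec x) <= Bd (lay x))%N].

Definition fpt x := if (lay x < n)%N then Pt (lay x).+1 (fun t => dec x (Next t)) (fun i => cs x i.+1) else x.

Lemma miss_le k G : (miss k G <= M)%N.
Proof. by apply: leq_trans (count_size _ _) (L_len k). Qed.

Lemma valid_fpt x : valid x -> valid (fpt x).
Proof.
rewrite /fpt; case: ifP => // kn [H1 H2 H3 H4 H5]; split => //=.
- exact: mcs_next.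
- by move=> i Hi; apply: H4; lia.
- have := miss_le (lay x).+1 (fun t => dec x (Next t)); have := H3 0; move: H5; rewrite /Bd mulSn; lia.
Qed.

Lemma iter_fpt x i : (lay x + i <= n)%N ->
  iter i fpt x = Pt (lay x + i) (fun t => dec x (nexts i t)) (fun j => cs x (i + j)).
Proof.
elim: i => [|i IH] H; first by case: x {H} => k G c /=; rewrite addn0.
rewrite iterS IH; last by lia.
rewrite /fpt /=; case: ifP => [_|]; last by lia.
congr Pt; first by rewrite addnS.
- by apply: funext => t; rewrite /nexts -iterSr.
- by apply: funext => j; rewrite addSnnS.
Qed.

Definition Ccore (G D : formula PV -> bool) := forall chi, G (Box chi) -> D chi /\ D (Box chi).
Definition wle u v := u = v \/ (Ccore (dec u) (dec v) /\ (cs u 0 < cs v 0)%N).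
Definition lt x y := [/\ lay x = lay y, Ccore (dec x) (dec y), (cs x 0 < cs y 0)%N &
  forall i, (0 < i)%N -> (lay x + i <= n)%N -> wle (iter i fpt x) (iter i fpt y)].

Lemma Ccore_trans G D E : Ccore G D -> Ccore D E -> Ccore G E.
Proof. by move=> H1 H2 chi /H1 [_ /H2 [? ?]]. Qed.

Lemma wle_trans u v w : wle u v -> wle v w -> wle u w.
Proof.
move=> [->|[H1 H2]] // [<-|[H3 H4]]; first by right.
by right; split; [apply: Ccore_trans H1 H3 | apply: ltn_trans H2 H4].
Qed.

Lemma lt_trans x y z : lt x y -> lt y z -> lt x z.
Proof.
move=> [l1 c1 s1 w1] [l2 c2 s2 w2]; split.
- by rewrite l1.
- exact: Ccore_trans c1 c2.
- exact: ltn_trans s1 s2.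
- by move=> i i0 H; apply: wle_trans (w1 i i0 H) (w2 i i0 _); rewrite -l1.
Qed.

Lemma lt_irr x : ~ lt x x.
Proof. by move=> [_ _]; rewrite ltnn. Qed.

Lemma lt_fpt x y : lt x y -> fpt x = fpt y \/ lt (fpt x) (fpt y).
Proof.
move=> Hxy; have [l1 c1 s1 w1] := Hxy.
case kn: (lay x < n)%N; last by right; rewrite /fpt -l1 kn.
have lfx : lay (fpt x) = (lay x).+1 by rewrite /fpt kn.
case: (w1 1 isT _) => [|E|[Hc Hs]]; first by rewrite addn1.
- by left; exact: E.
- right; split => //.
  + by rewrite lfx /fpt -l1 kn.
  + move=> i i0 H; rewrite -!iterSr; apply: w1 => //; move: H; rewrite lfx; lia.
Qed.

Lemma count_le (l : list (formula PV)) (P Q : pred (formula PV)) :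
  (forall t, List.In t l -> P t -> Q t) -> (count P l <= count Q l)%N.
Proof.
elim: l => //= b l IH2 H2.
have IHl := IH2 (fun u Hu => H2 u (or_intror Hu)); have Hb := H2 b (or_introl erefl).
case Pb: (P b); case Qb: (Q b) => /=; try lia.
Qed.

Lemma count_lt (l : list (formula PV)) (P Q : pred (formula PV)) :
  (forall t, List.In t l -> P t -> Q t) -> (exists t, List.In t l /\ Q t /\ ~~ P t) ->
  (count P l < count Q l)%N.
Proof.
elim: l => [_ [t [//]]|a l IH] H [t [/= Ht [Qt Pt]]].
have Hl : forall t, List.In t l -> P t -> Q t by move=> u Hu; apply: H; right.
have Hle := count_le Hl.
have Ha := H a (or_introl erefl).
case: Ht => [Et|Ht].
- subst a; move: Qt Pt; case: (P t); case: (Q t) => //= _ _; lia.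
- have := IH Hl (ex_intro _ t (conj Ht (conj Qt Pt))).
  case Pa: (P a); case Qa: (Q a) => /=; try lia.
Qed.

Lemma construct_succ x a : valid x -> inS (lay x) (Box a) -> dec x (Box a) = false ->
  exists y, [/\ valid y, lt x y & dec y a = false].
Proof.
case: x => k G c [/= kn HG Hdc Hnc Hb] Ha Ga.
have [D [mD Dpsi Da HC HI]] := exist_succ kn HG Ha Ga.
pose EQ i := forall t, inS (k + i) t -> G (nexts i t) = D (nexts i t).
have EQS : forall i j, EQ i -> EQ (i + j).
  move=> i j E t Ht; rewrite nextsD; apply: E; apply/inS_nexts; by rewrite -addnA.
pose cy i := if i == 0 then (c 0).+1 else if (n - k < i)%N then 0 else
  if `[< EQ i >] then c i else (c i).+1.
have Nrm : forall t, G t -> inS k t.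
  by move=> t Gt; apply: contrapT => Ht; move: Gt; rewrite (proj2 HG t Ht).
have NrmD : forall t, D t -> inS k t.
  by move=> t Gt; apply: contrapT => Ht; move: Gt; rewrite (proj2 mD t Ht).
exists (Pt k D cy); split => //.
- split => //=.
  + move=> i; rewrite /cy /=; case: i => [|i] /=.
    * case: ifP => _ //; case: asboolP => _; have := Hdc 0; lia.
    * case: ifP => [//|H1]; rewrite (_ : (n - k < i.+1) = false); last by lia.
      case: asboolP => E2; case: asboolP => E1; have := Hdc i.+1; try lia;
      first [by exfalso; apply: E2; rewrite -addn1; apply: EQS | by exfalso; apply: E1; rewrite -addn1; apply: EQS].
  + by move=> i H; rewrite /cy; case: ifP => [/eqP E|_]; [subst; lia | rewrite H].
  + rewrite /cy /=.
    have : (miss k D < miss k G)%N.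
      apply: count_lt.
      * move=> t _; case: t => //= chi /negP HD; apply/negP => HG'; apply: HD.
        exact: (proj2 (HC chi HG')).
      * exists (Box a); split; first by apply/inL.
        by rewrite /= Ga Dpsi.
    lia.
- split => //=.
  move=> i i0 H.
  rewrite !iter_fpt //=.
  have [E|NE] := pselect (EQ i).
  + left; congr Pt.
    * apply: funext => t; have [Ht|Ht] := pselect (inS (k + i) t); first exact: E.
      rewrite (proj2 HG) ?(proj2 mD) // => /inS_nexts //.
    * apply: funext => j; rewrite /cy; case: ifP => [/eqP|_]; first by lia.
      case: ifP => [H2|H2]; first by rewrite Hnc.
      by rewrite asboolT //; apply: EQS.
  + right; split.
    * by case: (HI i i0 H) => [E|Hc] //; exfalso; apply: NE.
    * rewrite /= /cy addn0.
      have -> : (i == 0) = false by lia.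
      have -> : (n - k < i)%N = false by lia.
      by rewrite asboolF.
Qed.

End Layers.

Local Open Scope classical_set_scope.

Lemma cderivP (X : topologicalType) (A : set X) x :
  cderiv A x <-> forall U, open U -> U x -> exists y, [/\ U y, A y & y <> x].
Proof.
rewrite /cderiv /closure /=; split.
- move=> H U oU Ux.
  have : nbhs x U by rewrite nbhsE; exists U.
  by move=> /H [y [[Ay nyx] Uy]]; exists y.
- move=> H B; rewrite nbhsE => -[U [oU Ux] UB].
  by have [y [Uy Ay yx]] := H U oU Ux; exists y; split => //; apply: UB.
Qed.

Lemma ncderivP (X : topologicalType) (A : set X) x :
  ~ cderiv A x <-> exists U, [/\ open U, U x & forall y, U y -> y <> x -> ~ A y].
Proof.
split.
- move=> H; apply: contrapT => H2; apply: H; apply/cderivP => U oU Ux.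
  apply: contrapT => H3; apply: H2; exists U; split => // y Uy yx Ay.
  by apply: H3; exists y.
- move=> [U [oU Ux HU]] /cderivP /(_ U oU Ux) [y [Uy Ay yx]].
  exact: (HU y Uy yx Ay).
Qed.

Section Sem.
Variable X : topologicalType.
Implicit Types A B : set X.

Lemma cderivS A B : A `<=` B -> cderiv A `<=` cderiv B.
Proof.
move=> AB x /cderivP H; apply/cderivP => U oU Ux.
by have [y [Uy Ay yx]] := H U oU Ux; exists y; split => //; apply: AB.
Qed.

Lemma cderivU A B x : cderiv (A `|` B) x -> cderiv A x \/ cderiv B x.
Proof.
move=> H; apply: contrapT => /not_orP [/ncderivP [U [oU Ux HU]] /ncderivP [V [oV Vx HV]]].
move/cderivP: H => /(_ (U `&` V) (openI oU oV) (conj Ux Vx)) [y [[Uy Vy] ABy yx]].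
by case: ABy => [/(HU y Uy yx)|/(HV y Vy yx)].
Qed.

Lemma cderiv_trans A x : scattered X -> cderiv (cderiv A) x -> cderiv A x.
Proof.
move=> sc H; apply: contrapT => /ncderivP [U [oU Ux HU]].
pose T := [set z | U z /\ (forall W, open W -> W z -> W x)].
have Tx : T x by split.
suff : T = set0 by move=> T0; move: Tx; rewrite T0.
apply: sc => z [Uz Hz]; apply/cderivP => W oW Wz.
have [zx|zx] := pselect (z = x); first subst z.
- move/cderivP: H => /(_ (W `&` U) (openI oW oU) (conj Wz Ux)) [y [[Wy Uy] dAy yx]].
  exists y; split => //; split => // W' oW' W'y.
  move/cderivP: dAy => /(_ (W' `&` U) (openI oW' oU) (conj W'y Uy)) [w [[W'w Uw] Aw wy]].
  have [wx|wx] := pselect (w = x); first by rewrite -wx.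
  by case: (HU w Uw wx Aw).
- by exists x; split; [apply: Hz | | move=> E; apply: zx].
Qed.

Lemma cderivL A x : scattered X -> cderiv A x -> cderiv (A `&` ~` cderiv A) x.
Proof.
move=> sc H; apply: contrapT => /ncderivP [U [oU Ux HU]].
pose S := U `&` A.
suff : S = set0.
  move=> S0; move/cderivP: H => /(_ U oU Ux) [y [Uy Ay _]].
  by have : S y by []; rewrite S0.
apply: sc => z [Uz Az]; apply: contrapT => /ncderivP [W [oW Wz HW]].
have ndz : ~ cderiv A z.
  apply/ncderivP; exists (W `&` U); split => //; first exact: openI.
  by move=> y [Wy Uy] yz Ay; apply: (HW y Wy yz).
have [zx|zx] := pselect (z = x); first by subst z.
by apply: (HU z Uz zx).
Qed.
End Sem.

Section Sound.
Variables (PV : Type) (X : topologicalType) (f : X -> X) (nu : PV -> set X).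

Lemma truth_taut (phi : formula PV) x : tautology phi -> truth f nu phi x.
Proof.
move=> /(_ (fun psi => `[< truth f nu psi x >])) H.
suff E : forall psi, beval (fun psi => `[< truth f nu psi x >]) psi = `[< truth f nu psi x >].
  by move: H; rewrite E => /asboolP.
elim=> [p|a Ha b Hb|a Ha|a Ha|a Ha] //=.
- by rewrite Ha Hb asbool_and.
- by rewrite Ha asbool_neg.
Qed.

Lemma soundness (phi : formula PV) : continuous f -> scattered X -> GLC phi ->
  forall x, truth f nu phi x.
Proof.
move=> cf sc; elim => {phi}.
- by move=> phi Ht x; apply: truth_taut.
- move=> a b x /= [H1 /contrapT [H2 H3]]; apply: H3 => Hb.
  have /cderivU [Hab|Ha] : cderiv (~` truth f nu (Imp a b) `|` ~` truth f nu a) x.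
    apply: cderivS Hb => y /= nb; apply: contrapT => /not_orP [/contrapT Hy /contrapT Ay].
    by apply: Hy.
  + by apply: H1. + by apply: H2.
- move=> a x /= [H1 H2]; apply: H2 => H3; apply: H1; apply: cderiv_trans => //.
  by apply: cderivS H3 => y /= /contrapT.
- move=> a x /= [H1 H2]; apply: H2 => H3; apply: H1.
  have := cderivL sc H3; apply: cderivS => y /= [Ny Hy] H; by apply: H; split.
- by move=> a x /=; tauto.
- by move=> a b x /=; tauto.
- move=> a x /= [[H1 H2] H3]; apply: H3 => H4.
  move/ncderivP: H2 => [U [oU Ufx HU]].
  move/cderivP: H4 => /(_ (f @^-1` U) ((proj1 (continuousP f)) cf U oU) Ufx) [y [Uy Ny yx]].
  apply: Ny; have [E|E] := pselect (f y = f x); first by rewrite /= E.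
  by apply: contrapT => Hy; apply: (HU (f y) Uy E).
- by move=> a b _ Hab _ Ha x; have := Hab x; move=> /= H; apply: contrapT => Hb; apply: H.
- move=> a _ Ha x /= H; move/cderivP: H => /(_ setT openT I) [y [_ Hy _]]; exact: Hy.
- by move=> a _ Ha x /=.
Qed.
End Sound.

Definition W PV (p0 : PV) (phi : formula PV) := {x : pt PV | valid p0 phi x}.
HB.instance Definition _ PV (p0 : PV) (phi : formula PV) := gen_eqMixin (W p0 phi).
HB.instance Definition _ PV (p0 : PV) (phi : formula PV) := gen_choiceMixin (W p0 phi).

Definition ltW PV (p0 : PV) phi (u v : W p0 phi) := lt phi (sval u) (sval v).
Definition opW PV (p0 : PV) phi (A : set (W p0 phi)) := forall u v, ltW u v -> A u -> A v.

Lemma opWT PV (p0 : PV) phi : opW (@setT (W p0 phi)).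
Proof. by []. Qed.
Lemma opWI PV (p0 : PV) phi : setI_closed (@opW PV p0 phi).
Proof. by move=> A B oA oB u v luv [Au Bu]; split; [apply: oA Au|apply: oB Bu]. Qed.
Lemma opWU PV (p0 : PV) phi (I : Type) (f : I -> set (W p0 phi)) :
  (forall i, opW (f i)) -> opW (\bigcup_i f i).
Proof. by move=> H u v luv [i _ fu]; exists i => //; apply: H fu. Qed.

HB.instance Definition _ PV (p0 : PV) (phi : formula PV) :=
  isOpenTopological.Build (W p0 phi) (@opWT PV p0 phi) (@opWI PV p0 phi) (@opWU PV p0 phi).

Section Truth.
Variables (PV : Type) (p0 : PV) (phi : formula PV).
Local Notation X := (W p0 phi).

Lemma openW (A : set X) : open A <-> opW A.
Proof.
rewrite openE /interior; split => [H u v luv Au|H u Au].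
- have := H u Au; case => B [oB Bu BA]; apply: BA; exact: oB Bu.
- by exists A; split.
Qed.

Definition fW (w : X) : X := exist _ (fpt phi (sval w)) (valid_fpt (proj2_sig w)).

Lemma sig_eqW (u v : X) : sval u = sval v -> u = v.
Proof. by case: u v => x Hx [y Hy] /= E; subst y; congr exist; apply: Prop_irrelevance. Qed.

Lemma cderivW (A : set X) w : cderiv A w <-> exists v, ltW w v /\ A v.
Proof.
split.
- move=> /cderivP H.
  have oU : open [set v | v = w \/ ltW w v].
    apply/openW => u v luv [E|lwu]; right; [by rewrite -E | exact: lt_trans lwu luv].
  have [y [[->|lwy] Ay yw]] := H _ oU (or_introl erefl) => //.
  by exists y.
- move=> [v [lwv Av]]; apply/cderivP => U /openW oU Uw.
  exists v; split => //; [exact: oU lwv Uw | move=> E; subst v; exact: lt_irr lwv].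
Qed.

Lemma contW : continuous fW.
Proof.
apply/continuousP => A /openW oA; apply/openW => u v luv /= Au.
have [E|L] := lt_fpt luv.
- by rewrite /= (_ : fW v = fW u) //; apply: sig_eqW; rewrite /= E.
- exact: (oA (fW u) (fW v) L Au).
Qed.

Lemma cs_bound (w : X) : (cs (sval w) 0 <= Bd phi (n phi))%N.
Proof.
case: w => x [H1 _ _ _ H5] /=; apply: leq_trans (leq_trans (leq_addr _ _) H5) _.
by rewrite /Bd leq_mul2r ltnS H1 orbT.
Qed.

Lemma scatW : scattered X.
Proof.
move=> S HS; apply/seteqP; split => // w Sw; exfalso.
suff : forall m (w : X), (Bd phi (n phi) - cs (sval w) 0 <= m)%N -> ~ S w.
  by move/(_ _ w (leqnn _)); apply.
elim => [|m IH] u Hu Su; have [v [luv Sv]] := proj1 (cderivW S u) (HS u Su);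
  have := cs_bound v; case: luv => _ _ Hc _.
- by move: Hu; lia.
- by move=> Hv; apply: (IH v) => //; move: Hu Hc Hv; lia.
Qed.

Definition nuW : PV -> set X := fun p w => dec (sval w) (Var p).

Lemma valid_mcs (w : X) : mcs p0 phi (lay (sval w)) (dec (sval w)).
Proof. by case: w => x [] /=. Qed.

Lemma truthW t (w : X) : inS phi (lay (sval w)) t -> (truth fW nuW t w <-> dec (sval w) t).
Proof.
elim: t w => [p|a IHa b IHb|a IHa|a IHa|a IHa] w H /=.
- by [].
- have [Ha Hb] := inS_and H; rewrite (mcs_and (valid_mcs w) H).
  split => [[/IHa -/(_ Ha) -> /IHb -/(_ Hb) ->]//|/andP [/IHa Ta /IHb Tb]].
  by split; [apply: Ta | apply: Tb].
- have Ha := inS_neg H; rewrite (mcs_negE (valid_mcs w) H).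
  split => [Na|/negP Na Ta]; last by apply: Na; apply/IHa.
  by apply/negP => Da; apply: Na; apply/IHa.
- have Ha := inS_box H; split.
  + move=> nd; case E: (dec (sval w) (Box a)) => //; exfalso.
    have [y [Vy lxy Dy]] := construct_succ (proj2_sig w) H E.
    apply: nd; apply/cderivW; exists (exist _ y Vy); split => //= Ta.
    have : dec y a by apply/(IHa (exist _ y Vy)) => //=; case: lxy => <-.
    by rewrite Dy.
  + move=> Db /cderivW [v [lwv Nv]]; apply: Nv; have [E C _ _] := lwv.
    by apply/IHa; [rewrite -E | exact: (proj1 (C a Db))].
- have [Ha kn] := inS_next H.
  have E : sval (fW w) = Pt (lay (sval w)).+1 (fun t => dec (sval w) (Next t)) (fun i => cs (sval w) i.+1).
    by rewrite /= /fpt kn.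
  by rewrite (IHa (fW w)) E.
Qed.

Lemma decr_le0 (c : nat -> nat) : (forall i, c i.+1 <= c i)%N -> forall i, (c i <= c 0)%N.
Proof. by move=> H; elim=> // i IH; apply: leq_trans (H i) IH. Qed.

Definition enc (w : X) : 'I_(n phi).+1 * {ffun 'I_(M phi) -> bool} * {ffun 'I_(n phi).+1 -> 'I_(Bd phi (n phi)).+1} :=
  (inord (lay (sval w)), [ffun i : 'I_(M phi) => dec (sval w) (List.nth i (L phi (lay (sval w))) phi)],
   [ffun i : 'I_(n phi).+1 => inord (cs (sval w) i)]).

Lemma enc_inj : injective enc.
Proof.
move=> u v; have Bu := cs_bound u; have Bv := cs_bound v.
case: u v Bu Bv => [[k G c] Vx] [[k' G' c'] Vy] /= Bu Bv [E1 E2 E3]; apply: sig_eqW => /=.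
have [kn mG dG nG _] := Vx; have [kn' mG' dG' nG' _] := Vy; move: kn kn' mG mG' nG nG' => /= kn kn' mG mG' nG nG'.
have Ek : k = k'.
  by have := congr1 (@nat_of_ord _) E1; rewrite !inordK // ltnS.
subst k'; congr Pt.
- apply: funext => t; have [Ht|Ht] := pselect (inS phi k t); last by rewrite (proj2 mG t Ht) (proj2 mG' t Ht).
  have [j [Hj Nj]] := List.In_nth _ _ phi (proj2 (inL phi k t) Ht).
  have Hj' : (j < M phi)%N by apply: leq_trans (L_len phi k); apply/ltP.
  have := congr1 (fun f : {ffun _ -> bool} => f (Ordinal Hj')) E2; rewrite !ffunE /= Nj.
  by [].
- apply: funext => i; have [Hi|Hi] := leqP i (n phi); last by rewrite nG ?nG'; lia.
  have := congr1 (fun f : {ffun _ -> _} => f (inord i)) E3; rewrite !ffunE inordK //.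
  have Hci : (c i <= Bd phi (n phi))%N by apply: leq_trans (decr_le0 dG i) Bu.
  have Hci' : (c' i <= Bd phi (n phi))%N by apply: leq_trans (decr_le0 dG' i) Bv.
  by move/(congr1 (@nat_of_ord _)); rewrite !inordK.
Qed.
End Truth.

Lemma finW (PV : Type) (p0 : PV) (phi : formula PV) : finite_set [set: W p0 phi].
Proof.
have : finite_set ((@enc PV p0 phi) @^-1` setT).
  by apply: finite_preimage; [move=> u v _ _; apply: enc_inj | apply: finite_finset].
by rewrite preimage_setT.
Qed.

Lemma init (PV : Type) (p0 : PV) (phi : formula PV) : ~ GLC phi ->
  exists w : W p0 phi, lay (sval w) = 0 /\ dec (sval w) phi = false.
Proof.
move=> NP.
have C : Con (Neg phi) by move=> H; apply: NP; apply: (mpt _ H); taut.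
have [G0 CG] := lind p0 (L phi 0) C.
pose G t := G0 t && `[< inS phi 0 t >].
have hatG : hat p0 phi 0 G = hat p0 phi 0 G0.
  rewrite /hat; f_equal; apply: List.map_ext_in => t /inL Ht.
  by rewrite /lit /G asboolT // andbT.
have CG' : Con (And (Neg phi) (hat p0 phi 0 G)) by rewrite hatG.
have mG : mcs p0 phi 0 G.
  split; first by apply: con_imp CG' (and_er _ _).
  by move=> t Ht; rewrite /G asboolF // andbF.
have V : valid p0 phi (Pt 0 G (fun _ => 0)).
  split => //=; have := miss_le phi 0 G; rewrite /Bd mul1n.
  by rewrite add0n.
exists (exist _ _ V); split => //=.
apply: (mcs_neg mG CG') => //; last exact: imp_refl.
split; [by rewrite /n add0n | exact: base_sub].
Qed.

Theorem mainTheorem7 (PV : Type) (inhPV : inhabited PV) (phi : formula PV) :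
  GLC phi <->
  (forall (X : topologicalType) (f : X -> X),
      continuous f -> finite_set [set: X] -> scattered X -> valid_on f phi).
Proof.
split.
- move=> H X f cf _ sc nu; apply/seteqP; split => // x _.
  exact: soundness.
- move=> H; case: inhPV => p0; apply: contrapT => NP.
  have [w [Hl Hw]] := init p0 NP.
  have := H (W p0 phi) (@fW PV p0 phi) (@contW PV p0 phi) (finW p0 phi) (@scatW PV p0 phi) (@nuW PV p0 phi).
  move=> E.
  have : truth (@fW PV p0 phi) (@nuW PV p0 phi) phi w by rewrite E.
  have Hin : inS phi (lay (sval w)) phi.
    by rewrite Hl; split; [rewrite /n add0n | exact: base_sub].
  by move=> /(proj1 (truthW Hin)); rewrite Hw.
Qed.
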